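(* Let $n\ge2$, $A\in\mathbb{R}^{n\times m}$, $B\in\mathbb{R}^{m\times n}$, and let $C$ be a cycle of the DSR$^{[2]}$ graph $G^{[2]}_{A,B}$. (i) If $C$ is twisted, then $\pi(C)$ is an s-walk if and only if $C$ is an s-cycle. (ii) If $C$ is direct, $\pi(C)=\{W',W''\}$, and both $W'$ and $W''$ are s-walks, then $C$ is an s-cycle.
   Context: DSR graphs: for $A\in\mathbb{R}^{n\times m}$, $B\in\mathbb{R}^{m\times n}$, $G_{A,B}$ is the signed, labelled bipartite digraph with S-vertices $S_1,\dots,S_n$ and R-vertices $R_1,\dots,R_m$, an arc $R_j\to S_i$ of sign $\mathrm{sign}(A_{ij})$ iff $A_{ij}\ne0$, an arc $S_i\to R_j$ of sign $\mathrm{sign}(B_{ji})$ iff $B_{ji}\ne0$, with antiparallel arcs of equal sign merged into an undirected edge. An edge arising from $A_{ij}\ne0$ (R-to-S or undirected) has label $|A_{ij}|$; an edge with only S-to-R orientation has label $\infty$. Walks traverse edges consistently with orientation (empty walks allowed); a cycle is a nonempty closed walk with no repeated vertex except first$=$last. A closed walk $(e_1,\dots,e_{2r})$ ($r\ge0$) is an s-walk if all its labels are finite and $\prod_{i=1}^r l(e_{2i-1})=\prod_{i=1}^r l(e_{2i})$; an s-cycle is a cycle which is an s-walk. DSR$^{[2]}$ graph: $\overline{\mathbf L}^A\in\mathbb{R}^{\binom n2\times mn}$ has rows indexed by $(i,j)$, $i<j$, columns by $(k,l)$, $1\le k\le m$, $1\le l\le n$, entries $A_{jk}$ if $l=i$,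 $-A_{ik}$ if $l=j$, $0$ otherwise; $\underline{\mathbf L}^B\in\mathbb{R}^{mn\times\binom n2}$ has $(k,l),(i,j)$ entry $B_{kj}$ if $l=i$, $-B_{ki}$ if $l=j$, $0$ otherwise. $G^{[2]}_{A,B}:=G_{\overline{\mathbf L}^A,\underline{\mathbf L}^B}$, with S-vertices $ij=ji$ and R-vertices $k^l$; an edge $(ij,k^l)$ exists only if $l\in\{i,j\}$. The projection $\pi$ sends an edge $(ij,k^j)$ to the edge $(S_i,R_k)$ of $G_{A,B}$, which has the same direction and label. Direct/twisted and $\pi(C)$: let $C$ have S-vertex sequence $a_1b_1,\dots,a_{T+1}b_{T+1}=a_1b_1$, and write the segment from $a_rb_r$ to $a_{r+1}b_{r+1}$ as $(a_rb_r,k^l,a_{r+1}b_{r+1})$ with $l$ the common index; its projection is a length-2 walk from $S_x$ to $S_y$, where $x$ is the element of $\{a_r,b_r\}$ other than $l$ and $y$ that of $\{a_{r+1},b_{r+1}\}$ other than $l$. Starting from empty walks at $S_{a_1}$ and $S_{b_1}$, for $r=1,\dots,T$ append the projected segment to whichever current walk ends at $S_x$. If the final walks $W',W''$ are both closed, $C$ is direct and $\pi(C)=\{W',W''\}$; otherwise $C$ is twisted and $\pi(C)=W'\sqcup W''$ is the closed walk obtained by traversing $W'$ and $W''$ in succession. *)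

(* Defs.v *)
From HB Require Import structures.
From mathcomp Require Import all_boot all_order all_algebra.
Set Implicit Arguments. Unset Strict Implicit. Unset Printing Implicit Defensive.
Import Order.TTheory GRing.Theory Num.Theory.
Local Open Scope ring_scope.

(* Generic DSR graph G_{A,B} with S-vertices of type S and R-vertices of    *)
(* type Rv, given by A : S -> Rv -> R (A_{s r}) and B : Rv -> S -> R         *)
(* (B_{r s}).  Between S_s and R_r there are at most two edges:            *)
(*  - the "A-edge" (exists iff A s r != 0): it is undirected when B r s has  *)
(*    the same (nonzero) sign as A s r ("merged"), otherwise it is the arc   *)
(*    R_r -> S_s; its label is |A s r|;                                      *)
(*  - the "B-edge" (exists iff B r s != 0 and the arcs were not merged): the *)
(*    arc S_s -> R_r, with label infinity.                                   *)
(* A walk is a sequence of traversal steps; a step records the S-vertex and *)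
(* R-vertex of the edge, which edge (st_A = true: the A-edge), and the       *)
(* direction of traversal (st_SR = true: from S_s to R_r).                   *)

Record step (S Rv : Type) := Step { st_s : S; st_r : Rv; st_A : bool; st_SR : bool }.

Section DSR.
Variables (R : realFieldType) (S Rv : eqType).
Variables (A : S -> Rv -> R) (B : Rv -> S -> R).

Definition merged (s : S) (r : Rv) : bool :=
  (A s r != 0) && (Num.sg (A s r) == Num.sg (B r s)).

Definition step_ok (st : step S Rv) : bool :=
  if st_A st then (A (st_s st) (st_r st) != 0) && (st_SR st ==> merged (st_s st) (st_r st))
  else [&& B (st_r st) (st_s st) != 0, ~~ merged (st_s st) (st_r st) & st_SR st].

Definition vstart (st : step S Rv) : S + Rv :=
  if st_SR st then inl (st_s st) else inr (st_r st).
Definition vend (st : step S Rv) : S + Rv :=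
  if st_SR st then inr (st_r st) else inl (st_s st).

Fixpoint chained (w : seq (step S Rv)) : bool :=
  match w with
  | a :: ((b :: _) as t) => (vend a == vstart b) && chained t
  | _ => true
  end.

Definition is_walk (w : seq (step S Rv)) : bool := all step_ok w && chained w.

Definition closed_walk (w : seq (step S Rv)) : bool :=
  is_walk w && (if w is a :: t then vend (last a t) == vstart a else true).

Definition is_cycle (w : seq (step S Rv)) : bool :=
  [&& closed_walk w, (0 < size w)%N & uniq (map vstart w)].

(* label of an A-edge (finite labels); B-edges have label infinity *)
Definition lbl (st : step S Rv) : R := `|A (st_s st) (st_r st)|.

Fixpoint alt_prods (w : seq (step S Rv)) : R * R :=
  match w with
  | a :: b :: t => ((lbl a * (alt_prods t).1), (lbl b * (alt_prods t).2))
  | [:: a] => (lbl a, 1)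
  | [::] => (1, 1)
  end.

Definition s_walk (w : seq (step S Rv)) : bool :=
  [&& closed_walk w, all (fun st => st_A st) w & (alt_prods w).1 == (alt_prods w).2].

Definition s_cycle (w : seq (step S Rv)) : bool := is_cycle w && s_walk w.

End DSR.

(* The DSR^[2] graph.  S-vertices: unordered pairs ij = ji, represented as  *)
(* (i, j) with i < j.  R-vertices: k^l represented as (k, l).              *)

Definition pair2 (n : nat) := {p : 'I_n * 'I_n | (p.1 < p.2)%N}.

Definition LbarA (R : realFieldType) (n m : nat) (A : 'M[R]_(n, m))
  (p : pair2 n) (kl : 'I_m * 'I_n) : R :=
  let i := (val p).1 in let j := (val p).2 in let k := kl.1 in let l := kl.2 in
  if l == i then A j k else if l == j then - A i k else 0.

Definition LunderB (R : realFieldType) (n m : nat) (B : 'M[R]_(m, n))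
  (kl : 'I_m * 'I_n) (p : pair2 n) : R :=
  let i := (val p).1 in let j := (val p).2 in let k := kl.1 in let l := kl.2 in
  if l == i then B k j else if l == j then - B k i else 0.

Definition matA (R : realFieldType) (n m : nat) (A : 'M[R]_(n, m)) : 'I_n -> 'I_m -> R :=
  fun i k => A i k.
Definition matB (R : realFieldType) (n m : nat) (B : 'M[R]_(m, n)) : 'I_m -> 'I_n -> R :=
  fun k i => B k i.

Definition G2step (n m : nat) := step (pair2 n) ('I_m * 'I_n).
Definition G1step (n m : nat) := step 'I_n 'I_m.

Definition other (n : nat) (p : pair2 n) (l : 'I_n) : 'I_n :=
  if l == (val p).1 then (val p).2 else (val p).1.

(* projection pi of a traversal of the edge (ij, k^l) onto (S_x, R_k), x the *)
(* element of {i,j} other than l: same edge kind (hence label) and direction. *)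
Definition proj_step (n m : nat) (st : G2step n m) : G1step n m :=
  Step (other (st_s st) (st_r st).2) (st_r st).1 (st_A st) (st_SR st).

(* Processes the segments (a_r b_r, k^l, a_{r+1} b_{r+1}) of a cycle given  *)
(* as a step sequence starting at an S-vertex; e1, e2 are the current       *)
(* endpoints of the walks w1 (started at S_{a_1}) and w2 (started at S_{b_1}). *)
Fixpoint proj_aux (n m : nat) (c : seq (G2step n m)) (e1 e2 : 'I_n)
  (w1 w2 : seq (G1step n m)) : 'I_n * 'I_n * seq (G1step n m) * seq (G1step n m) :=
  match c with
  | s1 :: s2 :: rest =>
      let x := other (st_s s1) (st_r s1).2 in
      let y := other (st_s s2) (st_r s2).2 in
      if e1 == x then proj_aux rest y e2 (w1 ++ [:: proj_step s1; proj_step s2]) w2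
      else proj_aux rest e1 y w1 (w2 ++ [:: proj_step s1; proj_step s2])
  | _ => (e1, e2, w1, w2)
  end.

Definition startS (n m : nat) (c : seq (G2step n m)) : seq (G2step n m) :=
  if c is st :: _ then (if st_SR st then c else rot 1 c) else c.

(* pi_data C = Some (direct?, W', W'') *)
Definition pi_data (n m : nat) (C : seq (G2step n m))
  : option (bool * seq (G1step n m) * seq (G1step n m)) :=
  let c := startS C in
  match c with
  | [::] => None
  | st :: _ =>
      let a1 := (val (st_s st)).1 in let b1 := (val (st_s st)).2 in
      let '(e1, e2, w1, w2) := proj_aux c a1 b1 [::] [::] in
      Some ((e1 == a1) && (e2 == b1), w1, w2)
  end.

(* Main.v *)
Require Import Defs.
From HB Require Import structures.
From mathcomp Require Import all_boot all_order all_algebra.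
From mathcomp Require Import ring zify.
Import Order.TTheory GRing.Theory Num.Theory.
Local Open Scope ring_scope.

Section Gen.
Variables (R : realFieldType) (S Rv : eqType).
Variables (A : S -> Rv -> R) (B : Rv -> S -> R).
Implicit Types (a b : step S Rv) (t u v w : seq (step S Rv)).

Lemma ap_cons a t :
  alt_prods A (a :: t) = (lbl A a * (alt_prods A t).2, (alt_prods A t).1).
Proof.
elim: t a => [|b t IH] a; first by rewrite /= mulr1.
by rewrite [alt_prods A (b :: t)]IH.
Qed.

Lemma ap_cat u v :
  alt_prods A (u ++ v) = if odd (size u) then
     ((alt_prods A u).1 * (alt_prods A v).2, (alt_prods A u).2 * (alt_prods A v).1)
   else ((alt_prods A u).1 * (alt_prods A v).1, (alt_prods A u).2 * (alt_prods A v).2).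
Proof.
elim: u => [|a u IH]; first by rewrite /= !mul1r; case: (alt_prods A v).
rewrite cat_cons !ap_cons IH /=; case: (odd (size u)) => /=; by rewrite !mulrA.
Qed.

Lemma ap_rot1 a t : ~~ odd (size (a :: t)) ->
  ((alt_prods A (rcons t a)).1 == (alt_prods A (rcons t a)).2) =
  ((alt_prods A (a :: t)).1 == (alt_prods A (a :: t)).2).
Proof.
move=> H; have od : odd (size t) by move: H; rewrite /= negbK.
rewrite -cats1 ap_cat od [alt_prods A (a :: t)]ap_cons /=.
by rewrite mulr1 eq_sym mulrC.
Qed.

Lemma chained_cons x t : chained (x :: t) =
  (if t is y :: _ then vend x == vstart y else true) && chained t.
Proof. by case: t. Qed.

Lemma chained_cat u v : chained (u ++ v) =
  [&& chained u, chained v & (if u is x :: t then if v is y :: _ then vend (last x t) == vstart y else true else true)].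
Proof.
elim: u => [|x u IH]; first by rewrite /= andbT.
rewrite cat_cons chained_cons IH [chained (x :: u)]chained_cons.
case: u {IH} => [|z u] /=; first by case: v => // y v; rewrite andbT andbC.
by rewrite !andbA.
Qed.

Lemma vend_vstart a b : vend a == vstart b -> st_SR b = ~~ st_SR a.
Proof. by case: a => s r x [] ; case: b => s' r' x' []. Qed.

Lemma chained_SR a t : chained (a :: t) -> st_SR (last a t) = st_SR a (+) odd (size t).
Proof.
elim: t a => [|b t IH] a /=; first by rewrite addbF.
move=> /andP[/vend_vstart e /IH ->]; rewrite e.
by case: (st_SR a); case: (odd (size t)).
Qed.

Lemma closed_even w : closed_walk A B w -> ~~ odd (size w).
Proof.
case: w => [|a t] //= /andP[/andP[_ ch]] /vend_vstart e.
move: (@chained_SR a t ch); rewrite e.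
by case: (st_SR (last a t)); case: (odd (size t)).
Qed.
End Gen.

Section Spec.
Variables (R : realFieldType) (n m : nat) (A : 'M[R]_(n, m)) (B : 'M[R]_(m, n)).

Local Notation ok2 := (step_ok (LbarA A) (LunderB B)).
Local Notation ok1 := (step_ok (matA A) (matB B)).

Lemma step_l (st : G2step n m) : ok2 st ->
  ((st_r st).2 == (val (st_s st)).1) || ((st_r st).2 == (val (st_s st)).2).
Proof.
case: st => p [k l] x y; rewrite /step_ok /merged /LbarA /LunderB /=.
case E1: (l == (sval p).1) => //=.
case E2: (l == (sval p).2) => //=.
by case: x; rewrite !eqxx.
Qed.

Lemma proj_ok (st : G2step n m) : ok2 st ->
  ok1 (proj_step st) && (lbl (matA A) (proj_step st) == lbl (LbarA A) st).
Proof.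
case: st => p [k l] x y; rewrite /proj_step /step_ok /merged /LbarA /LunderB /lbl /other /matA /matB /=.
case E1: (l == (sval p).1) => /=; first by rewrite eqxx andbT.
case E2: (l == (sval p).2) => /=; last by case: x; rewrite !eqxx.
by rewrite !oppr_eq0 !sgrN eqr_opp normrN eqxx andbT.
Qed.

Definition pairI (p : pair2 n) (e1 e2 : 'I_n) :=
  ((e1 == (val p).1) && (e2 == (val p).2)) || ((e1 == (val p).2) && (e2 == (val p).1)).

Lemma pair_neq (p : pair2 n) : (val p).1 != (val p).2.
Proof. move: p; rewrite /pair2 => -[[i j] /= h]; apply/eqP => e; by rewrite e ltnn in h. Qed.

Lemma pairI_sym p e1 e2 : pairI p e1 e2 = pairI p e2 e1.
Proof. by rewrite /pairI orbC; congr (_ || _); apply: andbC. Qed.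

Lemma pairI_other (p : pair2 n) l :
  (l == (val p).1) || (l == (val p).2) -> pairI p (other p l) l.
Proof.
rewrite /pairI /other; case: ifP => [/eqP -> _|_ /= /eqP ->]; by rewrite !eqxx ?orbT.
Qed.

Lemma pairI_cases p e1 e2 x l : pairI p e1 e2 -> pairI p x l ->
  (e1 = x /\ e2 = l) \/ (e1 = l /\ e2 = x).
Proof.
have := pair_neq p; rewrite /pairI.
case: (val p) => i j /= nij.
by move=> /orP[/andP[/eqP-> /eqP->]|/andP[/eqP-> /eqP->]]
  /orP[/andP[/eqP-> /eqP->]|/andP[/eqP-> /eqP->]]; auto;
  rewrite ?eqxx in nij.
Qed.


Definition wI (w : seq (G1step n m)) (a e : 'I_n) :=
  is_walk (matA A) (matB B) w &&
  (if w is x :: t then (vstart x == inl a) && (vend (last x t) == inl e) else e == a).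

Lemma wI_app w a e u1 u2 y : wI w a e -> ok1 u1 -> ok1 u2 -> vend u1 == vstart u2 ->
  vstart u1 == inl e -> vend u2 == inl y -> wI (w ++ [:: u1; u2]) a y.
Proof.
rewrite /wI /is_walk all_cat chained_cat => /andP[/andP[aw cw] hw] o1 o2 c12 s1 e2.
case: w aw cw hw => [|x t] aw cw hw.
  by move/eqP: hw => <-; rewrite /= o1 o2 c12 e2 s1.
move/andP: hw => [h1 /eqP h2].
rewrite aw cw /= last_cat /= o1 o2 c12 e2 h1 h2 (eqP s1) eqxx !andbT.
by [].
Qed.

Lemma proj_aux_cons2 (s1 s2 : G2step n m) rest e1 e2 w1 w2 :
  proj_aux (s1 :: s2 :: rest) e1 e2 w1 w2 =
  if e1 == other (st_s s1) (st_r s1).2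
  then proj_aux rest (other (st_s s2) (st_r s2).2) e2 (w1 ++ [:: proj_step s1; proj_step s2]) w2
  else proj_aux rest e1 (other (st_s s2) (st_r s2).2) w1 (w2 ++ [:: proj_step s1; proj_step s2]).
Proof. by []. Qed.

Lemma ap_cons2 (R' : realFieldType) (S Rv : eqType) (F : S -> Rv -> R') (s1 s2 : step S Rv) rest :
  alt_prods F (s1 :: s2 :: rest) =
  (lbl F s1 * (alt_prods F rest).1, lbl F s2 * (alt_prods F rest).2).
Proof. by []. Qed.

Lemma ap_seg (w : seq (G1step n m)) (s1 s2 : G2step n m) : ~~ odd (size w) ->
  ok2 s1 -> ok2 s2 ->
  alt_prods (matA A) (w ++ [:: proj_step s1; proj_step s2]) =
  ((alt_prods (matA A) w).1 * lbl (LbarA A) s1, (alt_prods (matA A) w).2 * lbl (LbarA A) s2).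
Proof.
move=> ev o1 o2; rewrite ap_cat (negbTE ev) ap_cons2 /=.
have /andP[_ /eqP ->] := proj_ok s1 o1; have /andP[_ /eqP ->] := proj_ok s2 o2.
by rewrite !mulr1.
Qed.

Lemma L1 c : forall e1 e2 w1 w2 r, ~~ odd (size c) -> all ok2 c ->
  ~~ odd (size w1) -> ~~ odd (size w2) ->
  r = proj_aux c e1 e2 w1 w2 ->
  [/\ ~~ odd (size r.1.2), ~~ odd (size r.2),
     all (fun st => st_A st) r.1.2 && all (fun st => st_A st) r.2 =
       [&& all (fun st => st_A st) w1, all (fun st => st_A st) w2 & all (fun st => st_A st) c],
     (alt_prods (matA A) r.1.2).1 * (alt_prods (matA A) r.2).1 =
       (alt_prods (matA A) w1).1 * (alt_prods (matA A) w2).1 * (alt_prods (LbarA A) c).1 &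
     (alt_prods (matA A) r.1.2).2 * (alt_prods (matA A) r.2).2 =
       (alt_prods (matA A) w1).2 * (alt_prods (matA A) w2).2 * (alt_prods (LbarA A) c).2].
Proof.
have [k] := ubnP (size c); elim: k c => // k IH [|s1 [|s2 rest]] szk e1 e2 w1 w2 r.
- by move=> _ _ h1 h2 -> /=; rewrite !mulr1 andbT.
- by [].
move=> ev /and3P[o1 o2 orest] h1 h2.
have szr : (size rest < k)%N by move: szk => /=; lia.
have evr : ~~ odd (size rest) by move: ev => /=; rewrite negbK.
have evs w : ~~ odd (size w) -> ~~ odd (size (w ++ [:: proj_step s1; proj_step s2])).
  by move=> hw; rewrite size_cat /= addn2 /= negbK.
rewrite proj_aux_cons2 ap_cons2; case: ifP => _ E.
- have [r1 r2 r3 r4 r5] := IH rest szr _ _ _ _ r evr orest (evs _ h1) h2 E.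
  split => //. rewrite r3 all_cat /=. by case: (all _ w1); case: (all _ w2); case: (st_A s1); case: (st_A s2).
    by rewrite r4 ap_seg //=; ring.
  by rewrite r5 ap_seg //=; ring.
- have [r1 r2 r3 r4 r5] := IH rest szr _ _ _ _ r evr orest h1 (evs _ h2) E.
  split => //; first by rewrite r3 all_cat /=; case: (all _ w1); case: (all _ w2); case: (st_A s1); case: (st_A s2).
    by rewrite r4 ap_seg //=; ring.
  by rewrite r5 ap_seg //=; ring.
Qed.

Lemma inl_eqE (S Rv : eqType) (a b : S) : (@inl S Rv a == inl b) = (a == b).
Proof. by apply/eqP/eqP => [[]|->]. Qed.

Lemma L2 c : forall p q e1 e2 w1 w2 a1 b1 r,
  all ok2 c -> chained c ->
  (if c is x :: t then (vstart x == inl p) && (vend (last x t) == inl q) else p == q) ->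
  pairI p e1 e2 -> wI w1 a1 e1 -> wI w2 b1 e2 ->
  r = proj_aux c e1 e2 w1 w2 ->
  [&& pairI q r.1.1.1 r.1.1.2, wI r.1.2 a1 r.1.1.1 & wI r.2 b1 r.1.1.2].
Proof.
have [k] := ubnP (size c); elim: k c => // k IH [|s1 [|s2 rest]] szk p q e1 e2 w1 w2 a1 b1 r.
- by move=> _ _ /eqP <- h1 h2 h3 -> /=; rewrite h1 h2 h3.
- move=> _ _; clear szk; case: s1 => s [k1 l1] x [] /andP[/eqP h1 /eqP h2]; by [].
move=> /and3P[o1 o2 orest]; rewrite chained_cons => /andP[c12].
rewrite chained_cons => /andP[c2r chr] /andP[sp ep].
have szr : (size rest < k)%N by move: szk => /=; lia.
have hl1 := step_l s1 o1; have hl2 := step_l s2 o2.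
have [ok1s1 /eqP lb1] := andP (proj_ok s1 o1).
have [ok1s2 /eqP lb2] := andP (proj_ok s2 o2).
clear szk; move: s1 s2 o1 o2 ok1s1 ok1s2 lb1 lb2 hl1 hl2 c12 c2r sp ep.
move=> [p1 [k1 l1] x1 y1] [p2 [k2 l2] x2 y2] /= o1 o2 ok1s1 ok1s2 lb1 lb2 hl1 hl2 c12 c2r sp ep.
clear lb1 lb2. case: y1 sp c12 o1 ok1s1 => /eqP // [<-{p}] c12 o1 ok1s1.
case: y2 c12 c2r ep o2 ok1s2 hl2 => /eqP // [<-{k2} <-{l2}] c2r ep o2 ok1s2 hl2.
have hp : (if rest is x :: t then (vstart x == inl p2) && (vend (last x t) == inl q) else p2 == q) = true.
  move: c2r ep; case: (rest) => [|s3 r'] /=; first by rewrite inl_eqE.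
  by move=> c2r ->; rewrite eq_sym c2r.
have px := pairI_other p1 l1 hl1; have py := pairI_other p2 l1 hl2.
have seg : vend (proj_step (Step p1 (k1, l1) x1 true)) == vstart (proj_step (Step p2 (k1, l1) x2 false)).
  by rewrite /= eqxx.
move=> hpe hw1 hw2; case: ifP => hx E.
- have e2l : e2 = l1.
    by case: (pairI_cases _ _ _ _ _ hpe px) => [[]|[h1 h2]] //; rewrite h2 -(eqP hx) h1.
  eapply (IH rest szr p2 q); last exact E; [exact orest|exact chr|exact hp| | |exact hw2].
    by rewrite e2l.
  apply: (wI_app _ _ _ _ _ _ hw1 ok1s1 ok1s2 seg); by rewrite /= ?inl_eqE // eq_sym.
- have [e1l e2x] : e1 = l1 /\ e2 = other p1 l1.
    by case: (pairI_cases _ _ _ _ _ hpe px) => [[h1 h2]|] //; rewrite h1 eqxx in hx.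
  eapply (IH rest szr p2 q); last exact E; [exact orest|exact chr|exact hp| |exact hw1|].
    by rewrite e1l pairI_sym.
  apply: (wI_app _ _ _ _ _ _ hw2 ok1s1 ok1s2 seg); by rewrite /= ?inl_eqE // e2x.
Qed.

End Spec.

Arguments L1 {R n m A B c e1 e2 w1 w2 r}.
Arguments L2 {R n m A B c p q e1 e2 w1 w2 a1 b1 r}.
Arguments closed_even {R S Rv A B w}.
Arguments ap_cat {R S Rv} A u v.
Arguments pairI {n}.
Arguments wI {R n m} A B.
Arguments pair_neq {n}.
Arguments pairI_sym {n}.
Section Main.
Variables (R : realFieldType) (n m : nat) (A : 'M[R]_(n, m)) (B : 'M[R]_(m, n)).
Local Notation ok2 := (step_ok (LbarA A) (LunderB B)).
Local Notation ok1 := (step_ok (matA A) (matB B)).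

Lemma startS_facts (C : seq (G2step n m)) : closed_walk (LbarA A) (LunderB B) C ->
  ~~ odd (size C) -> (0 < size C)%N ->
  exists st c', startS C = st :: c' /\ [/\ st_SR st, closed_walk (LbarA A) (LunderB B) (st :: c'),
    size (st :: c') = size C,
    all (fun st => st_A st) (st :: c') = all (fun st => st_A st) C &
    ((alt_prods (LbarA A) (st :: c')).1 == (alt_prods (LbarA A) (st :: c')).2) =
    ((alt_prods (LbarA A) C).1 == (alt_prods (LbarA A) C).2)].
Proof.
case: C => [|a t] // cw ev _; rewrite /startS.
case SRa: (st_SR a); first by exists a, t; split.
case: t cw ev => [|b t] cw ev; first by [].
have [[aok ch] cl] : (all ok2 [:: a, b & t] /\ chained [:: a, b & t]) /\
   vend (last a (b :: t)) == vstart a.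
  by move: cw; rewrite /closed_walk /is_walk => /andP[/andP[-> ->] ->].
exists b, (rcons t a); rewrite rot1_cons; split => //; split.
- move: ch; rewrite chained_cons => /andP[/vend_vstart -> _]; by rewrite SRa.
- rewrite /closed_walk /is_walk -rcons_cons all_rcons -cats1 chained_cat.
  move: aok ch; rewrite chained_cons => /= /andP[-> ->] /andP[c1 ->] /=.
  by move: cl => /= ->; rewrite last_rcons c1.
- by rewrite -rcons_cons size_rcons.
- by rewrite -rcons_cons all_rcons.
- by rewrite -rcons_cons ap_rot1.
Qed.

Lemma final_closed (p : pair2 n) e1 e2 w1 w2 : pairI p e1 e2 ->
  ~~ ((e1 == (val p).1) && (e2 == (val p).2)) ->
  wI A B w1 (val p).1 e1 -> wI A B w2 (val p).2 e2 ->
  closed_walk (matA A) (matB B) (w1 ++ w2).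
Proof.
have np := pair_neq p.
rewrite /pairI => /orP[->//|/andP[/eqP-> /eqP->]] _.
case: w1 => [|x1 t1]; first by rewrite /wI /= => /eqP e; rewrite e eqxx in np.
case: w2 => [|x2 t2]; first by rewrite /wI /= => _ /eqP e; rewrite e eqxx in np.
rewrite /wI /closed_walk /is_walk => /andP[/andP[a1 c1] /andP[s1 l1]] /andP[/andP[a2 c2] /andP[s2 l2]].
rewrite all_cat a1 a2 chained_cat c1 c2 /= (eqP l1) (eqP s2) eqxx /=.
by rewrite last_cat /= (eqP l2) (eqP s1).
Qed.
End Main.
Arguments startS_facts {R n m A B C}.
Arguments final_closed {R n m A B p e1 e2 w1 w2}.

Theorem proposition5p4 (R : realFieldType) (n m : nat)
  (A : 'M[R]_(n, m)) (B : 'M[R]_(m, n)) (C : seq (G2step n m)) :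
  (2 <= n)%N ->
  is_cycle (LbarA A) (LunderB B) C ->
  (forall W1 W2 : seq (G1step n m), pi_data C = Some (false, W1, W2) ->
     (s_walk (matA A) (matB B) (W1 ++ W2) <-> s_cycle (LbarA A) (LunderB B) C)) /\
  (forall W1 W2 : seq (G1step n m), pi_data C = Some (true, W1, W2) ->
     s_walk (matA A) (matB B) W1 -> s_walk (matA A) (matB B) W2 ->
     s_cycle (LbarA A) (LunderB B) C).
Proof.
move=> _ cyc; have /and3P[cw szC _] := cyc.
have ev := closed_even cw.
have [st [c' [Ec [SR cw' sz allE apE]]]] := startS_facts cw ev szC.
have ev' : ~~ odd (size (st :: c')) by rewrite sz.
have [[ok' ch'] cl'] : (all (step_ok (LbarA A) (LunderB B)) (st :: c') /\ chained (st :: c')) /\ vend (last st c') == vstart st.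
  by move: cw'; rewrite /closed_walk /is_walk => /andP[/andP[-> ->] ->].
rewrite /pi_data Ec.
case E: (proj_aux _ _ _ _ _) => [[[e1 e2] w1] w2].
have [ev1 ev2 hA h1 h2] := L1 (w1:=[::]) (w2:=[::]) ev' ok' isT isT (esym E).
have hpath : (vstart st == inl (st_s st)) && (vend (last st c') == inl (st_s st)).
  by rewrite (eqP cl') /vstart SR eqxx.
have pI0 : pairI (st_s st) (val (st_s st)).1 (val (st_s st)).2 by rewrite /pairI !eqxx.
have wI0 (a : 'I_n) : wI A B [::] a a by rewrite /wI /= eqxx.
have := L2 (p:=st_s st) (q:=st_s st) (w1:=[::]) (w2:=[::]) ok' ch' hpath pI0 (wI0 _) (wI0 _) (esym E).
move=> /and3P[/= pI hw1 hw2].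
move: hA; rewrite !andTb => hA.
have ap0 : alt_prods (matA A) [::] = (1, 1) by [].
rewrite ap0 !mul1r in h1 h2.
have apW : alt_prods (matA A) (w1 ++ w2) =
  ((alt_prods (matA A) w1).1 * (alt_prods (matA A) w2).1,
   (alt_prods (matA A) w1).2 * (alt_prods (matA A) w2).2).
  by rewrite ap_cat (negbTE ev1).
have apc : ((alt_prods (LbarA A) C).1 == (alt_prods (LbarA A) C).2) =
  ((alt_prods (matA A) w1).1 * (alt_prods (matA A) w2).1 ==
   (alt_prods (matA A) w1).2 * (alt_prods (matA A) w2).2).
  by rewrite -apE h1 h2.
split.
- move=> W1 W2 [tw <- <-]; split.
  + case/and3P => _ aW eqW.
    rewrite apW /= in eqW; rewrite /s_cycle cyc /s_walk cw /= apc eqW andbT -allE -hA.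
    by rewrite all_cat in aW.
  + case/andP => _ /and3P[_ aC eqC].
    rewrite /s_walk (final_closed pI _ hw1 hw2); last by rewrite tw.
    by rewrite all_cat hA allE aC apW -apc eqC.
- move=> W1 W2 [_ <- <-] /and3P[_ a1' e1'] /and3P[_ a2' e2'].
  rewrite /s_cycle cyc /s_walk cw /= apc (eqP e1') (eqP e2') eqxx andbT.
  by rewrite -allE -hA a1' a2'.
Qed.
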